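(* Let $\mathcal{G}$ be an effective ample groupoid. (1) If $|\operatorname{Orb}_{\mathcal{G}}(x)|\ge2$ for every $x\in\mathcal{G}^{(0)}$, then $\llbracket\mathcal{G}\rrbracket$ covers $\mathcal{G}$. (2) If $|\operatorname{Orb}_{\mathcal{G}}(x)|\ge3$ for every $x\in\mathcal{G}^{(0)}$, then $\mathsf{D}(\llbracket\mathcal{G}\rrbracket)$ covers $\mathcal{G}$.
   Context: Étale groupoid: range map $r(g)=gg^{-1}$ (and source $s(g)=g^{-1}g$) a local homeomorphism; ample: étale with $\mathcal{G}^{(0)}$ Hausdorff having a basis of compact open sets; effective: interior of $\{g:s(g)=r(g)\}$ equals $\mathcal{G}^{(0)}$. $\operatorname{Orb}_{\mathcal{G}}(x)=\{r(g):s(g)=x\}$. A full bisection is an open $U\subseteq\mathcal{G}$ with $s|_U,r|_U$ injective and $s(U)=r(U)=\mathcal{G}^{(0)}$; $\pi_U=r|_U\circ(s|_U)^{-1}$. $\llbracket\mathcal{G}\rrbracket$ is the group of all $\pi_U$ for full bisections $U$ with compact support (closure of moved points); $\mathsf{D}(\llbracket\mathcal{G}\rrbracket)$ its commutator subgroup. A subgroup $\Gamma\le\llbracket\mathcal{G}\rrbracket$ covers $\mathcal{G}$ if for every $g\in\mathcal{G}$ there is a full bisection $U$ with $g\in U$ and $\pi_U\in\Gamma$. *)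

(* Defs.v *)
From mathcomp Require Import all_boot all_classical topology.
Set Implicit Arguments.
Unset Strict Implicit.
Unset Printing Implicit Defensive.
Local Open Scope classical_set_scope.

Section Groupoids.
Variable G : topologicalType.
Variable comp : G -> G -> Prop.
Variable mul : G -> G -> G.       (* product, meaningful on G^(2) *)
Variable inv : G -> G.

Record is_groupoid : Prop := {
  gpd_assoc : forall x y z, comp x y -> comp y z ->
     [/\ comp (mul x y) z, comp x (mul y z) & mul (mul x y) z = mul x (mul y z)];
  gpd_invK : forall x, inv (inv x) = x;
  gpd_comp_inv : forall x, comp (inv x) x;
  gpd_invl : forall x y, comp x y -> mul (inv x) (mul x y) = y;
  gpd_invr : forall x y, comp y x -> mul (mul y x) (inv x) = y }.

Record is_topological_groupoid : Prop := {
  tgpd_groupoid : is_groupoid;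
  tgpd_inv_cont : continuous inv;
  tgpd_mul_cont : {within [set p : G * G | comp p.1 p.2],
                    continuous (fun p : G * G => mul p.1 p.2)} }.

Definition src (g : G) : G := mul (inv g) g.
Definition rng (g : G) : G := mul g (inv g).

Definition unit_space : set G := [set x | exists g, x = src g].

Definition relopen (A S : set G) : Prop := exists V, open V /\ S = V `&` A.

Definition local_homeo_into (A : set G) (f : G -> G) : Prop :=
  (forall g, A (f g)) /\
  forall g, exists U, [/\ open U, U g, {in U &, injective f},
     {within U, continuous f} &
     forall W, open W -> W `<=` U -> relopen A (f @` W)].

Definition etale : Prop := local_homeo_into unit_space rng.

Definition unit_space_hausdorff : Prop :=
  forall x y, unit_space x -> unit_space y -> x <> y ->
    exists U V, [/\ open U, open V, U x, V y & U `&` V `&` unit_space = set0].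

Definition unit_space_compact_open_basis : Prop :=
  forall x V, unit_space x -> open V -> V x ->
    exists K, [/\ K `<=` unit_space, relopen unit_space K, compact K, K x & K `<=` V].

Definition ample : Prop :=
  [/\ etale, unit_space_hausdorff & unit_space_compact_open_basis].

Definition isotropy : set G := [set g | src g = rng g].

Definition effective : Prop := interior isotropy = unit_space.

Definition gorbit (x : G) : set G := [set y | exists g, src g = x /\ rng g = y].

Definition full_bisection (U : set G) : Prop :=
  [/\ open U, {in U &, injective src}, {in U &, injective rng},
      src @` U = unit_space & rng @` U = unit_space].

(* f is the homeomorphism pi_U = r|_U o (s|_U)^-1 of G^(0),
   extended by the identity outside G^(0) *)
Definition pi_of (U : set G) (f : G -> G) : Prop :=
  forall x, (unit_space x -> exists u, [/\ U u, src u = x & f x = rng u]) /\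
            (~ unit_space x -> f x = x).

Definition support (f : G -> G) : set G :=
  closure [set x | unit_space x /\ f x <> x] `&` unit_space.

Definition full_group : set (G -> G) :=
  [set f | exists U, [/\ full_bisection U, pi_of U f & compact (support f)]].

Definition gen_subgroup (S : set (G -> G)) : set (G -> G) :=
  [set f | forall H : set (G -> G),
     S `<=` H -> H id ->
     (forall a b, H a -> H b -> H (a \o b)) ->
     (forall a a', H a -> cancel a a' -> cancel a' a -> H a') -> H f].

Definition commutators (Gam : set (G -> G)) : set (G -> G) :=
  [set c | exists a b a' b', [/\ Gam a, Gam b,
     cancel a a' /\ cancel a' a, cancel b b' /\ cancel b' b &
     c = a' \o b' \o a \o b]].

Definition derived (Gam : set (G -> G)) : set (G -> G) :=
  gen_subgroup (commutators Gam).

Definition covers (Gam : set (G -> G)) : Prop :=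
  forall g, exists U f, [/\ full_bisection U, U g, pi_of U f & Gam f].

End Groupoids.

(* Main.v *)
Require Import Defs.
From mathcomp Require Import all_boot all_classical topology.
Local Open Scope classical_set_scope.

Section Gpd.
Variable G : topologicalType.
Variable comp : G -> G -> Prop.
Variable mul : G -> G -> G.
Variable inv : G -> G.
Hypothesis HG : is_topological_groupoid comp mul inv.

Local Notation s := (src mul inv).
Local Notation r := (rng mul inv).
Local Notation G0 := (unit_space mul inv).

Let Hg : is_groupoid comp mul inv. Proof. by case: HG. Qed.

Lemma invK x : inv (inv x) = x. Proof. by case: Hg. Qed.
Lemma comp_inv_l x : comp (inv x) x. Proof. by case: Hg. Qed.
Lemma comp_inv_r x : comp x (inv x).
Proof. by have := comp_inv_l (inv x); rewrite invK. Qed.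
Lemma assoc {x y z} : comp x y -> comp y z ->
  [/\ comp (mul x y) z, comp x (mul y z) & mul (mul x y) z = mul x (mul y z)].
Proof. by case: Hg => H *; apply: H. Qed.
Lemma invl {x y} : comp x y -> mul (inv x) (mul x y) = y.
Proof. by case: Hg => ? ? ? H *; apply: H. Qed.
Lemma invr {x y} : comp y x -> mul (mul y x) (inv x) = y.
Proof. by case: Hg => ? ? ? ? H *; apply: H. Qed.

Lemma s_inv x : s (inv x) = r x.
Proof. by rewrite /src /rng invK. Qed.
Lemma r_inv x : r (inv x) = s x.
Proof. by rewrite /src /rng invK. Qed.

Lemma comp_s x : comp x (s x).
Proof. by case: (assoc (comp_inv_r x) (comp_inv_l x)). Qed.
Lemma comp_r x : comp (r x) x.
Proof. by case: (assoc (comp_inv_r x) (comp_inv_l x)). Qed.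
Lemma mul_r x : mul (r x) x = x.
Proof. by have := invr (comp_inv_r x); rewrite invK. Qed.
Lemma mul_s x : mul x (s x) = x.
Proof. by have := invl (comp_inv_l x); rewrite invK. Qed.

Lemma comp_sr {x y} : comp x y -> s x = r y.
Proof.
move=> cxy; case: (assoc cxy (comp_inv_r y)) => _ c2 e.
rewrite invr // in e.
have := invl c2; rewrite -/(rng mul inv y) -e => <-; by [].
Qed.

Lemma sr_comp {x y} : s x = r y -> comp x y.
Proof.
move=> e; have c1 := comp_s x; rewrite e in c1.
by case: (assoc c1 (comp_r y)) => _ + _; rewrite mul_r.
Qed.

Lemma s_mul {x y} : comp x y -> s (mul x y) = s y.
Proof.
move=> cxy; case: (assoc cxy (comp_inv_r y)) => c _ _.
by rewrite (comp_sr c) r_inv.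
Qed.

Lemma r_mul {x y} : comp x y -> r (mul x y) = r x.
Proof.
move=> cxy; case: (assoc (comp_inv_l x) cxy) => _ c _.
by rewrite -(comp_sr c) s_inv.
Qed.

Lemma r_s x : r (s x) = s x.
Proof. rewrite {1}/src r_mul; [exact: r_inv | exact: comp_inv_l]. Qed.
Lemma s_s x : s (s x) = s x.
Proof. exact (s_mul (comp_inv_l x)). Qed.

Lemma unitP {z} : G0 z -> s z = z /\ r z = z.
Proof. by case=> g ->; rewrite s_s r_s. Qed.
Lemma unit_s z : G0 (s z). Proof. by exists z. Qed.
Lemma unit_r z : G0 (r z). Proof. by exists (inv z); rewrite s_inv. Qed.
Lemma unit_of_r {z} : r z = z -> G0 z.
Proof. by move=> e; exists (inv z); rewrite s_inv e. Qed.
Lemma unit_inv {z} : G0 z -> inv z = z.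
Proof.
move=> /unitP [e1 e2]; have := mul_s (inv z).
rewrite s_inv e2 => h; rewrite -h; exact: e1.
Qed.

Lemma mul_inv_cancel {w v} : s w = s v -> mul (mul w (inv v)) v = w.
Proof.
move=> e; have c : comp w (inv v) by apply: sr_comp; rewrite r_inv.
by have := invr c; rewrite invK.
Qed.

Lemma openP' (A : set G) :
  (forall x, A x -> exists B, [/\ open B, B x & B `<=` A]) -> open A.
Proof.
move=> H; rewrite openE => x /H [B [oB Bx BA]].
rewrite /interior; apply: (filterS BA); apply: open_nbhs_nbhs; split => //.
Qed.

Lemma nbhs_ex {x} {A : set G} : nbhs x A -> exists B, [/\ open B, B x & B `<=` A].
Proof. by rewrite nbhsE => -[B [oB Bx] BA]; exists B. Qed.

Lemma open_nbhs' {x} {A : set G} : open A -> A x -> nbhs x A.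
Proof. by move=> oA Ax; apply: open_nbhs_nbhs; split. Qed.

Lemma cont_inv : continuous inv. Proof. by case: HG. Qed.

Lemma open_pre_inv {N : set G} : open N -> open (inv @^-1` N).
Proof. by move=> oN; move/continuousP: cont_inv; apply. Qed.

Lemma mul_near {a b} {N : set G} : comp a b -> open N -> N (mul a b) ->
  exists P Q, [/\ open P, open Q, P a, Q b &
    forall x y, P x -> Q y -> comp x y -> N (mul x y)].
Proof.
move=> cab oN Nab; case: HG => _ _ /subspace_continuousP H.
have := H (a, b) cab N (open_nbhs' oN Nab).
rewrite /= /within => -[[A B]] [] /= nA nB sub.
case: (nbhs_ex nA) => A' [oA' A'a A'A]; case: (nbhs_ex nB) => B' [oB' B'b B'B].
exists A', B'; split => // x y Ax By cxy.
exact: (sub (x, y) (conj (A'A _ Ax) (B'B _ By)) cxy).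
Qed.

Lemma open_pre_s {N : set G} : open N -> open (s @^-1` N).
Proof.
move=> oN; apply: openP' => x Nsx.
case: (mul_near (comp_inv_l x) oN Nsx) => P [Q [oP oQ Px Qx H]].
exists (inv @^-1` P `&` Q); split.
- by apply: openI => //; apply: open_pre_inv.
- by split.
- by move=> w [Pw Qw]; apply: H => //; apply: comp_inv_l.
Qed.

Lemma open_pre_r {N : set G} : open N -> open (r @^-1` N).
Proof.
move=> oN; apply: openP' => x Nsx.
case: (mul_near (comp_inv_r x) oN Nsx) => P [Q [oP oQ Px Qx H]].
exists (P `&` inv @^-1` Q); split.
- by apply: openI => //; apply: open_pre_inv.
- by split.
- by move=> w [Pw Qw]; apply: H => //; apply: comp_inv_r.
Qed.

Lemma cont_s : continuous s. Proof. apply/continuousP => A; exact: open_pre_s. Qed.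
Lemma cont_r : continuous r. Proof. apply/continuousP => A; exact: open_pre_r. Qed.

Definition inj_on (B : set G) (f : G -> G) :=
  forall x y, B x -> B y -> f x = f y -> x = y.

Lemma relopen_local (S : set G) : S `<=` G0 ->
  (forall y, S y -> exists M, [/\ open M, M y & M `&` G0 `<=` S]) ->
  relopen G0 S.
Proof.
move=> SG H.
exists [set t | exists M, [/\ open M, M `&` G0 `<=` S & M t]]; split.
- apply: openP' => x [M [oM MS Mx]]; exists M; split => // t Mt.
  by exists M.
- apply/seteqP; split => t.
  + move=> St; split; last exact: SG.
    by case: (H t St) => M [oM Mt MS]; exists M.
  + by case=> -[M [oM MS Mt]] Gt; apply: MS.
Qed.

Hypothesis Hample : ample mul inv.

Lemma etaleH : etale mul inv. Proof. by case: Hample. Qed.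

Lemma r_chart g : exists U, [/\ open U, U g, inj_on U r &
     forall W, open W -> W `<=` U -> relopen G0 (r @` W)].
Proof.
case: etaleH => _ /(_ g) [U [oU Ug iU _ H]]; exists U; split => //.
by move=> x y Ux Uy e; apply: iU => //; rewrite in_setE.
Qed.

Lemma G0_open : open G0.
Proof.
apply: openP' => z Gz.
case: (r_chart z) => U [oU Uz iU _].
exists (U `&` r @^-1` U); split.
- by apply: openI => //; apply: open_pre_r.
- by split => //=; rewrite (unitP Gz).2.
- move=> t [Ut /= Urt]; apply: unit_of_r.
  by apply: iU => //; rewrite (unitP (unit_r t)).2.
Qed.

Lemma r_open {W : set G} : open W -> relopen G0 (r @` W).
Proof.
move=> oW; apply: relopen_local; first by move=> _ [w _ <-]; apply: unit_r.
move=> _ [w Ww <-].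
case: (r_chart w) => U [oU Uw iU H].
case: (H (W `&` U)) => //; first exact: openI.
move=> M [oM e]; exists M; split => //.
- have : (r @` (W `&` U)) (r w) by exists w.
  by rewrite e => -[].
- by rewrite -e => _ [t [Wt _] <-]; exists t.
Qed.

Lemma s_open {W : set G} : open W -> relopen G0 (s @` W).
Proof.
move=> oW; have -> : s @` W = r @` (inv @^-1` W).
  apply/seteqP; split => _ [t Wt <-].
  + by exists (inv t); rewrite /= ?invK // r_inv.
  + by exists (inv t) => //; rewrite s_inv.
by apply: r_open; apply: open_pre_inv.
Qed.

Lemma bis_chart g : exists B, [/\ open B, B g, inj_on B s & inj_on B r].
Proof.
case: (r_chart g) => U [oU Ug iU _].
case: (r_chart (inv g)) => V [oV Vg iV _].
exists (U `&` inv @^-1` V); split.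
- by apply: openI => //; apply: open_pre_inv.
- by split.
- move=> x y [_ Vx] [_ Vy] e.
  rewrite -(invK x) -(invK y); congr inv; apply: iV => //.
  by rewrite !r_inv.
- by move=> x y [Ux _] [Uy _]; apply: iU.
Qed.

Lemma hausH : unit_space_hausdorff mul inv. Proof. by case: Hample. Qed.
Lemma basisH : unit_space_compact_open_basis mul inv. Proof. by case: Hample. Qed.

Lemma sep_compact {K : set G} {z} : compact K -> K `<=` G0 -> G0 z -> ~ K z ->
  exists N, [/\ open N, N z & forall t, N t -> ~ K t].
Proof.
move=> cK KG Gz nKz; apply: contrapT => nex.
have clK : closure K z.
  move=> B /nbhs_ex [N [oN Nz NB]]; apply: contrapT => h; apply: nex.
  exists N; split => // t Nt Kt; apply: h; exists t; split => //; exact: NB.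
have PF : ProperFilter (within K (nbhs z)) by apply: within_nbhs_proper.
have FK : within K (nbhs z) K by apply: nearW => t.
case: (cK _ PF FK) => k [Kk clk].
have nkz : z <> k by move=> e; apply: nKz; rewrite e.
case: (hausH z k Gz (KG _ Kk) nkz) => U [V [oU oV Uz Vk e]].
have FU : within K (nbhs z) (U `&` K).
  rewrite /within; apply: filterS (open_nbhs' oU Uz) => t Ut Kt; by split.
case: (clk _ _ FU (open_nbhs' oV Vk)) => t [[Ut Kt] Vt].
have : (U `&` V `&` G0) t by split; [split|apply: KG].
by rewrite e.
Qed.

Lemma compl_open (K : set G) : compact K -> K `<=` G0 -> open (G0 `&` ~` K).
Proof.
move=> cK KG; apply: openP' => z [Gz nKz].
case: (sep_compact cK KG Gz nKz) => N [oN Nz NK].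
exists (N `&` G0); split => //; first by apply: openI => //; apply: G0_open.
by move=> t [Nt Gt]; split => //; apply: NK.
Qed.

Lemma compact_s (V : set G) : compact V -> compact (s @` V).
Proof. by apply: continuous_compact; apply: continuous_subspaceT; apply: cont_s. Qed.
Lemma compact_r (V : set G) : compact V -> compact (r @` V).
Proof. by apply: continuous_compact; apply: continuous_subspaceT; apply: cont_r. Qed.

Lemma shrink {O D : set G} : open O -> inj_on O s -> compact D ->
  relopen G0 D -> D `<=` s @` O ->
  [/\ open (O `&` s @^-1` D), compact (O `&` s @^-1` D) & s @` (O `&` s @^-1` D) = D].
Proof.
move=> oO iO cD [M [oM eD]] DO; split.
- have -> : O `&` s @^-1` D = O `&` s @^-1` M.
    apply/seteqP; split => t [Ot Dt]; split => //=.
    + by move: Dt; rewrite /= eD => -[].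
    + by rewrite eD; split => //; apply: unit_s.
  by apply: openI => //; apply: open_pre_s.
- move=> F PF FV.
  have FD : F (s @^-1` D) by apply: (filterS _ FV) => t [_ Dt].
  case: (cD (s @ F) _ FD) => z [Dz clz].
  case: (DO _ Dz) => u Ou e.
  exists u; split; first by split => //=; rewrite e.
  move=> A B FA /nbhs_ex [B' [oB' B'u B'B]].
  case: (s_open (openI oB' oO)) => N [oN eN].
  have FsA : F (s @^-1` (s @` (A `&` (O `&` s @^-1` D)))).
    by apply: (filterS _ (filterI FA FV)) => t At; exists t.
  have Nz : N z.
    have : (s @` (B' `&` O)) z by exists u.
    by rewrite eN => -[].
  case: (clz (s @` (A `&` (O `&` s @^-1` D))) _ FsA (open_nbhs' oN Nz)) => t [[a [Aa [Oa _]] ea] Nt].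
  have : (s @` (B' `&` O)) t by rewrite eN; split => //; rewrite -ea; apply: unit_s.
  case=> b [B'b Ob] eb.
  exists a; split => //; rewrite (iO _ _ Oa Ob) ?ea ?eb //; exact: B'B.
- apply/seteqP; split; first by move=> _ [u [_ Du] <-].
  move=> z Dz; case: (DO _ Dz) => u Ou e; exists u => //; split => //=.
  by rewrite e.
Qed.

Lemma fb_mk (U : set G) : open U -> inj_on U s -> inj_on U r ->
  s @` U = G0 -> r @` U = G0 -> full_bisection mul inv U.
Proof.
move=> oU iS iR eS eR; split => //.
- by move=> x y; rewrite !in_setE => Ux Uy; apply: iS.
- by move=> x y; rewrite !in_setE => Ux Uy; apply: iR.
Qed.

Lemma fb_open {U} : full_bisection mul inv U -> open U.
Proof. by case. Qed.
Lemma fb_injs {U} : full_bisection mul inv U -> inj_on U s.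
Proof. by case=> _ H _ _ _ x y Ux Uy; apply: H; rewrite in_setE. Qed.
Lemma fb_injr {U} : full_bisection mul inv U -> inj_on U r.
Proof. by case=> _ _ H _ _ x y Ux Uy; apply: H; rewrite in_setE. Qed.
Lemma fb_s {U} : full_bisection mul inv U -> s @` U = G0.
Proof. by case. Qed.
Lemma fb_r {U} : full_bisection mul inv U -> r @` U = G0.
Proof. by case. Qed.

Definition pif (U : set G) (z : G) : G :=
  if pselect (G0 z) then r (xget z [set u | U u /\ s u = z]) else z.

Lemma pif_pi {U} : full_bisection mul inv U -> Defs.pi_of mul inv U (pif U).
Proof.
move=> fU z; split.
- move=> Gz; rewrite /pif; destruct (pselect (G0 z)) as [gz|]; last by [].
  have ex : exists u, [set u | U u /\ s u = z] u.
    by rewrite -(fb_s fU) in Gz; case: Gz => u Uu e; exists u.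
  case: (xgetPex z ex) => Uu e; by exists (xget z [set u | U u /\ s u = z]).
- by move=> nGz; rewrite /pif; destruct (pselect (G0 z)).
Qed.

Definition prodB (U V : set G) : set G :=
  [set w | exists u v, [/\ U u, V v, s u = r v & w = mul u v]].

Lemma prodB_open U V : open U -> open V -> s @` V = G0 -> open (prodB U V).
Proof.
move=> oU oV sV; apply: openP' => _ [u0 [v0 [Uu0 Vv0 e0 ->]]].
have c0 : comp u0 v0 by apply: sr_comp.
have c : comp (mul u0 v0) (inv v0) by apply: sr_comp; rewrite r_inv s_mul.
have e1 : mul (mul u0 v0) (inv v0) = u0 by apply: invr.
case: (mul_near c oU (_ : U (mul (mul u0 v0) (inv v0)))) => [|P [Q [oP oQ Pw Qv H]]].
  by rewrite e1.
case: (s_open (openI oV (open_pre_inv oQ))) => M [oM eM].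
have Mw : M (s (mul u0 v0)).
  have : (s @` (V `&` inv @^-1` Q)) (s (mul u0 v0)) by exists v0; rewrite ?s_mul.
  by rewrite eM => -[].
exists (P `&` s @^-1` M); split => //; first by apply: openI => //; apply: open_pre_s.
move=> w [Pw' /= Mw'].
have : (s @` (V `&` inv @^-1` Q)) (s w) by rewrite eM; split => //; apply: unit_s.
case=> v [Vv Qiv] e.
have cw : comp w (inv v) by apply: sr_comp; rewrite r_inv.
exists (mul w (inv v)), v; split => //.
- by apply: H.
- by rewrite s_mul // s_inv.
- by rewrite mul_inv_cancel.
Qed.

Lemma fb_prod {U V} : full_bisection mul inv U -> full_bisection mul inv V ->
  full_bisection mul inv (prodB U V).
Proof.
move=> fU fV; apply: fb_mk.
- by apply: prodB_open; [apply: fb_open fU|apply: fb_open fV|apply: fb_s fV].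
- move=> _ _ [u1 [v1 [U1 V1 e1 ->]]] [u2 [v2 [U2 V2 e2 ->]]].
  rewrite !s_mul; try by apply: sr_comp.
  move=> ev; have ev' := fb_injs fV _ _ V1 V2 ev; subst v2.
  by rewrite (fb_injs fU _ _ U1 U2 (etrans e1 (esym e2))).
- move=> _ _ [u1 [v1 [U1 V1 e1 ->]]] [u2 [v2 [U2 V2 e2 ->]]].
  rewrite !r_mul; try by apply: sr_comp.
  move=> eu; have eu' := fb_injr fU _ _ U1 U2 eu; subst u2.
  by rewrite (fb_injr fV _ _ V1 V2 (etrans (esym e1) e2)).
- apply/seteqP; split; first by move=> _ [w _ <-]; apply: unit_s.
  move=> z; rewrite -(fb_s fV) => -[v Vv <-].
  have : G0 (r v) by apply: unit_r.
  rewrite -(fb_s fU) => -[u Uu e].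
  exists (mul u v); first by exists u, v.
  by rewrite s_mul //; apply: sr_comp.
- apply/seteqP; split; first by move=> _ [w _ <-]; apply: unit_r.
  move=> z; rewrite -(fb_r fU) => -[u Uu <-].
  have : G0 (s u) by apply: unit_s.
  rewrite -(fb_r fV) => -[v Vv e].
  exists (mul u v); first by exists u, v.
  by rewrite r_mul //; apply: sr_comp.
Qed.

Lemma pi_prod {U V f h} : full_bisection mul inv U -> full_bisection mul inv V ->
  Defs.pi_of mul inv U f -> Defs.pi_of mul inv V h -> Defs.pi_of mul inv (prodB U V) (f \o h).
Proof.
move=> fU fV pf ph z; split => Gz /=.
- case: (ph z) => /(_ Gz) [v [Vv ev ehz]] _.
  have Ghz : G0 (h z) by rewrite ehz; apply: unit_r.
  case: (pf (h z)) => /(_ Ghz) [u [Uu eu efz]] _.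
  have c : comp u v by apply: sr_comp; rewrite eu.
  exists (mul u v); split.
  + by exists u, v; split => //; rewrite eu.
  + by rewrite s_mul.
  + by rewrite efz r_mul.
- case: (ph z) => _ /(_ Gz) ->.
  by case: (pf z) => _ /(_ Gz) ->.
Qed.

Lemma pi_invol {U a} : full_bisection mul inv U -> (forall u, U u -> U (inv u)) ->
  Defs.pi_of mul inv U a -> forall z, a (a z) = z.
Proof.
move=> fU sym pa z; have [Gz|nGz] := pselect (G0 z).
- case: (pa z) => /(_ Gz) [u [Uu eu ->]] _.
  case: (pa (r u)) => /(_ (unit_r u)) [u' [Uu' eu' ->]] _.
  have : u' = inv u by apply: (fb_injs fU) => //; [apply: sym | rewrite s_inv].
  by move=> ->; rewrite r_inv.
- by case: (pa z) => _ /(_ nGz) e; rewrite !e.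
Qed.

Lemma support_comp {f h} : compact (Defs.support mul inv f) -> compact (Defs.support mul inv h) ->
  compact (Defs.support mul inv (f \o h)).
Proof.
move=> cf ch.
have -> : Defs.support mul inv (f \o h) =
  (Defs.support mul inv f `|` Defs.support mul inv h) `&`
     closure [set x | G0 x /\ (f \o h) x <> x].
  apply/seteqP; split; last by move=> x [[[_ Gx]|[_ Gx]] cx].
  move=> x [cx Gx]; split => //.
  have : closure ([set x | G0 x /\ f x <> x] `|` [set x | G0 x /\ h x <> x]) x.
    apply: (closureS _ cx) => t [Gt ne] /=.
    have [e|ne'] := pselect (h t = t); last by right.
    by left; split => //; rewrite -{1}e.
  by rewrite closureU => -[?|?]; [left|right].
by apply: compact_closedI; [apply: compactU|apply: closed_closure].
Qed.

Lemma inj_union (A B : set G) f : inj_on A f -> inj_on B f ->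
  (forall x y, A x -> B y -> f x <> f y) -> inj_on (A `|` B) f.
Proof.
move=> iA iB d x y [Ax|Bx] [Ay|By] e.
- exact: iA.
- by case: (d _ _ Ax By).
- by case: (d _ _ Ay Bx).
- exact: iB.
Qed.

Definition transpB (V : set G) : set G :=
  V `|` inv @^-1` V `|` (G0 `&` ~` (s @` V `|` r @` V)).

Lemma transp {V : set G} : open V -> compact V -> inj_on V s -> inj_on V r ->
  (forall z, (s @` V) z -> ~ (r @` V) z) ->
  [/\ full_bisection mul inv (transpB V),
      forall u, transpB V u -> transpB V (inv u) &
      compact (Defs.support mul inv (pif (transpB V)))].
Proof.
move=> oV cV iVs iVr dV.
set K := s @` V `|` r @` V.
have KG : K `<=` G0 by move=> _ [[v _ <-]|[v _ <-]]; [apply: unit_s|apply: unit_r].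
have cK : compact K by apply: compactU; [apply: compact_s|apply: compact_r].
have oT : open (transpB V).
  apply: openU; first by apply: openU => //; apply: open_pre_inv.
  exact: compl_open.
have iiVs : inj_on (inv @^-1` V) s.
  move=> x y Vx Vy e; rewrite -(invK x) -(invK y); congr inv.
  by apply: iVr => //; rewrite !r_inv.
have iiVr : inj_on (inv @^-1` V) r.
  move=> x y Vx Vy e; rewrite -(invK x) -(invK y); congr inv.
  by apply: iVs => //; rewrite !s_inv.
have iU : forall f, (f = s \/ f = r) -> inj_on (G0 `&` ~` K) f.
  move=> f [->|->] x y [Gx _] [Gy _]; [rewrite (unitP Gx).1 (unitP Gy).1|
     rewrite (unitP Gx).2 (unitP Gy).2] => //.
have fT : full_bisection mul inv (transpB V).
  apply: fb_mk => //.
  - apply: inj_union; first apply: inj_union => //.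
    + move=> x y Vx Vy e; apply: (dV (s x)); first by exists x.
      by rewrite e -r_inv; exists (inv y).
    + by apply: iU; left.
    + move=> x y Vx [Gy nKy] e; apply: nKy; rewrite -(unitP Gy).1 -e.
      case: Vx => Vx; [left; exists x => // | right; exists (inv x) => //].
      by rewrite r_inv.
  - apply: inj_union; first apply: inj_union => //.
    + move=> x y Vx Vy e; apply: (dV (r y)); last by exists x.
      by rewrite -s_inv; exists (inv y).
    + by apply: iU; right.
    + move=> x y Vx [Gy nKy] e; apply: nKy; rewrite -(unitP Gy).2 -e.
      case: Vx => Vx; [right; exists x => // | left; exists (inv x) => //].
      by rewrite s_inv.
  - apply/seteqP; split; first by move=> _ [w _ <-]; apply: unit_s.
    move=> z Gz; have [Kz|nKz] := pselect (K z).
    + case: Kz => -[v Vv <-]; first by exists v => //; left; left.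
      by exists (inv v); [left; right; rewrite /= invK|rewrite s_inv].
    + by exists z; [right|rewrite (unitP Gz).1].
  - apply/seteqP; split; first by move=> _ [w _ <-]; apply: unit_r.
    move=> z Gz; have [Kz|nKz] := pselect (K z).
    + case: Kz => -[v Vv <-]; last by exists v => //; left; left.
      by exists (inv v); [left; right; rewrite /= invK|rewrite r_inv].
    + by exists z; [right|rewrite (unitP Gz).2].
split => //.
- move=> u [[Vu|Vu]|[Gu nKu]].
  + by left; right; rewrite /= invK.
  + by left; left.
  + by rewrite (unit_inv Gu); right.
- have pa := pif_pi fT.
  set a := pif (transpB V).
  have MK : forall z, G0 z -> a z <> z -> K z.
    move=> z Gz naz; apply: contrapT => nKz; apply: naz.
    case: (pa z) => /(_ Gz) [u [Tu eu ez]] _.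
    have Tz : transpB V z by right.
    have e : u = z by apply: (fb_injs fT) => //; rewrite eu (unitP Gz).1.
    by rewrite /a ez e (unitP Gz).2.
  have -> : Defs.support mul inv a = K `&` closure [set x | G0 x /\ a x <> x].
    apply/seteqP; split; last by move=> x [Kx cx]; split => //; apply: KG.
    move=> x [cx Gx]; split => //; apply: contrapT => nKx.
    have oO : open (G0 `&` ~` K) by apply: compl_open.
    case: (cx _ (open_nbhs' oO (conj Gx nKx))) => t [[Gt nat] [_ nKt]].
    by apply: nKt; apply: MK.
  by apply: compact_closedI => //; apply: closed_closure.
Qed.

Lemma build {g} {Nx Ny : set G} : open Nx -> open Ny -> Nx (s g) -> Ny (r g) ->
  exists O, [/\ open O, O g, inj_on O s, inj_on O r &
                forall u, O u -> Nx (s u) /\ Ny (r u)].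
Proof.
move=> oX oY Xg Yg; case: (bis_chart g) => B [oB Bg iBs iBr].
exists (B `&` s @^-1` Nx `&` r @^-1` Ny); split.
- by apply: openI; [apply: openI => //; apply: open_pre_s|apply: open_pre_r].
- by [].
- by move=> x y [[Bx _] _] [[By _] _]; apply: iBs.
- by move=> x y [[Bx _] _] [[By _] _]; apply: iBr.
- by move=> u [[_ ?] ?].
Qed.

Lemma two_bis {g k} {Nx Ny Nz : set G} : open Nx -> open Ny -> open Nz ->
  s g = s k -> Nx (s g) -> Ny (r g) -> Nz (r k) ->
  exists V1 V2,
   [/\ open V1, compact V1, inj_on V1 s, inj_on V1 r & V1 g] /\
   [/\ open V2, compact V2, inj_on V2 s, inj_on V2 r & V2 k] /\
   [/\ s @` V1 = s @` V2, (forall u, V1 u -> Nx (s u) /\ Ny (r u)) &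
       (forall u, V2 u -> Nx (s u) /\ Nz (r u))].
Proof.
move=> oX oY oZ egk Xg Yg Zk.
case: (build oX oY Xg Yg) => O1 [oO1 O1g i1s i1r N1].
case: (build oX oZ (_ : Nx (s k)) Zk) => [|O2 [oO2 O2k i2s i2r N2]].
  by rewrite -egk.
case: (s_open oO1) => M1 [oM1 e1]; case: (s_open oO2) => M2 [oM2 e2].
have M1g : M1 (s g).
  have : (s @` O1) (s g) by exists g.
  by rewrite e1 => -[].
have M2g : M2 (s g).
  have : (s @` O2) (s g) by exists k.
  by rewrite e2 => -[].
case: (basisH (s g) (M1 `&` M2) (unit_s g) (openI oM1 oM2) (conj M1g M2g)) =>
  D [DG rD cD Dg DM].
have D1 : D `<=` s @` O1 by rewrite e1 => z Dz; split; [case: (DM _ Dz)|apply: DG].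
have D2 : D `<=` s @` O2 by rewrite e2 => z Dz; split; [case: (DM _ Dz)|apply: DG].
case: (shrink oO1 i1s cD rD D1) => oV1 cV1 sV1.
case: (shrink oO2 i2s cD rD D2) => oV2 cV2 sV2.
exists (O1 `&` s @^-1` D), (O2 `&` s @^-1` D); split; last split.
- split => //.
  + by move=> x y [Ox _] [Oy _]; apply: i1s.
  + by move=> x y [Ox _] [Oy _]; apply: i1r.
- split => //.
  + by move=> x y [Ox _] [Oy _]; apply: i2s.
  + by move=> x y [Ox _] [Oy _]; apply: i2r.
  + by split => //=; rewrite -egk.
- split; first by rewrite sV1 sV2.
  + by move=> u [Ou _]; apply: N1.
  + by move=> u [Ou _]; apply: N2.
Qed.

Lemma P1 {g} : s g <> r g -> exists U f,
  [/\ full_bisection mul inv U, U g, Defs.pi_of mul inv U f &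
      compact (Defs.support mul inv f)].
Proof.
move=> ne.
case: (hausH (s g) (r g) (unit_s g) (unit_r g) ne) => P [Q [oP oQ Pg Qg ePQ]].
case: (two_bis (g:=g) (k:=g) oP oQ oQ erefl Pg Qg Qg) => V1 [V2 [[oV cV iVs iVr Vg] [_ [_ NV _]]]].
case: (transp oV cV iVs iVr) => [z [v Vv <-] [v' Vv' e]|fT _ cT].
  have : (P `&` Q `&` G0) (s v) by split; [split; [apply: (NV _ Vv).1|
    rewrite -e; apply: (NV _ Vv').2]|apply: unit_s].
  by rewrite ePQ.
exists (transpB V1), (pif (transpB V1)); split => //.
- by left; left.
- exact: pif_pi.
Qed.

Lemma fg_transp V : full_bisection mul inv (transpB V) ->
  compact (Defs.support mul inv (pif (transpB V))) ->
  full_group mul inv (pif (transpB V)).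
Proof. by move=> fT cT; exists (transpB V); split => //; apply: pif_pi. Qed.

Lemma P2 {g k} : s g <> r g -> s k = s g -> r k <> s g -> r k <> r g ->
  exists U f, [/\ full_bisection mul inv U, U g, Defs.pi_of mul inv U f &
      derived (full_group mul inv) f].
Proof.
move=> nxy ek nzx nzy.
have Gx := unit_s g; have Gy := unit_r g; have Gz := unit_r k.
case: (hausH _ _ Gx Gy nxy) => P1 [Q1 [oP1 oQ1 P1x Q1y e1]].
case: (hausH _ _ Gx Gz (nesym nzx)) => P2 [R2 [oP2 oR2 P2x R2z e2]].
case: (hausH _ _ Gy Gz (nesym nzy)) => Q3 [R3 [oQ3 oR3 Q3y R3z e3]].
have oX := openI oP1 oP2; have oY := openI oQ1 oQ3; have oZ := openI oR2 oR3.
case: (two_bis (g:=g) (k:=k) oX oY oZ (esym ek) (conj P1x P2x) (conj Q1y Q3y)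
   (conj R2z R3z)) => V1 [V2 [[oV1 cV1 i1s i1r V1g] [[oV2 cV2 i2s i2r V2k]
   [eS N1 N2]]]].
have dXY : forall t, G0 t -> (P1 `&` P2) t -> (Q1 `&` Q3) t -> False.
  move=> t Gt [? _] [? _]; have : (P1 `&` Q1 `&` G0) t by [].
  by rewrite e1.
have dXZ : forall t, G0 t -> (P1 `&` P2) t -> (R2 `&` R3) t -> False.
  move=> t Gt [_ ?] [? _]; have : (P2 `&` R2 `&` G0) t by [].
  by rewrite e2.
have dYZ : forall t, G0 t -> (Q1 `&` Q3) t -> (R2 `&` R3) t -> False.
  move=> t Gt [_ ?] [_ ?]; have : (Q3 `&` R3 `&` G0) t by [].
  by rewrite e3.
case: (transp oV1 cV1 i1s i1r) => [_ [v Vv <-] [v' Vv' e]|fTa syma cTa].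
  apply: (dXY (s v) (unit_s v)); first exact: (N1 _ Vv).1.
  by rewrite -e; exact: (N1 _ Vv').2.
case: (transp oV2 cV2 i2s i2r) => [_ [v Vv <-] [v' Vv' e]|fTb symb cTb].
  apply: (dXZ (s v) (unit_s v)); first exact: (N2 _ Vv).1.
  by rewrite -e; exact: (N2 _ Vv').2.
set Ta := transpB V1; set Tb := transpB V2.
set a := pif Ta; set b := pif Tb.
have pa : Defs.pi_of mul inv Ta a by apply: pif_pi.
have pb : Defs.pi_of mul inv Tb b by apply: pif_pi.
exists (prodB Ta (prodB Tb (prodB Ta Tb))), (a \o (b \o (a \o b))); split.
- by apply: fb_prod => //; apply: fb_prod => //; apply: fb_prod.
- have : (s @` V2) (s g) by rewrite -eS; exists g.
  case=> v2 V2v2 ev2.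
  have Tar : Ta (r v2).
    right; split; first exact: unit_r.
    move=> [[v Vv ev]|[v Vv ev]].
    + apply: (dXZ (r v2) (unit_r v2)); last exact: (N2 _ V2v2).2.
      by rewrite -ev; exact: (N1 _ Vv).1.
    + apply: (dYZ (r v2) (unit_r v2)); last exact: (N2 _ V2v2).2.
      by rewrite -ev; exact: (N1 _ Vv).2.
  exists g, (mul (inv v2) v2); split.
  + by left; left.
  + exists (inv v2), v2; split => //.
    * by left; right; rewrite /= invK.
    * exists (r v2), v2; split => //; first by left; left.
      - by rewrite (unitP (unit_r v2)).1.
      - by rewrite mul_r.
    * by rewrite s_inv.
  + by rewrite r_mul ?r_inv ?ev2 //; apply: comp_inv_l.
  + by change (g = mul g (s v2)); rewrite ev2 mul_s.
- apply: pi_prod => //; first by apply: fb_prod => //; apply: fb_prod.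
  apply: pi_prod => //; first by apply: fb_prod.
  by apply: pi_prod.
- move=> H HS Hid Hc Hi; apply: HS.
  exists a, b, a, b; split.
  + exact: fg_transp.
  + exact: fg_transp.
  + by split => z; apply: (pi_invol fTa syma pa).
  + by split => z; apply: (pi_invol fTb symb pb).
  + by [].
Qed.

Lemma pick3 (x y : G) {y1 y2 y3 : G} : y1 <> y2 -> y1 <> y3 -> y2 <> y3 ->
  (y1 <> x /\ y1 <> y) \/ (y2 <> x /\ y2 <> y) \/ (y3 <> x /\ y3 <> y).
Proof.
move=> n12 n13 n23.
have [e1x|n1x] := pselect (y1 = x); have [e1y|n1y] := pselect (y1 = y);
have [e2x|n2x] := pselect (y2 = x); have [e2y|n2y] := pselect (y2 = y);
have [e3x|n3x] := pselect (y3 = x); have [e3y|n3y] := pselect (y3 = y);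
  try by [left | right; left | right; right];
  exfalso; subst; congruence.
Qed.

Lemma Q2 {g} : (forall x, G0 x ->
      exists y1 y2 y3,
        [/\ gorbit mul inv x y1, gorbit mul inv x y2 & gorbit mul inv x y3] /\
        [/\ y1 <> y2, y1 <> y3 & y2 <> y3]) -> s g <> r g ->
  exists U f, [/\ full_bisection mul inv U, U g, Defs.pi_of mul inv U f &
      derived (full_group mul inv) f].
Proof.
move=> Horb ne.
case: (Horb _ (unit_s g)) => y1 [y2 [y3 [[[h1 [s1 r1]] [h2 [s2 r2]] [h3 [s3 r3]]]
  [n12 n13 n23]]]].
case: (pick3 (s g) (r g) n12 n13 n23) => [[a b]|[[a b]|[a b]]].
- by apply: (P2 (k:=h1)) => //; rewrite r1.
- by apply: (P2 (k:=h2)) => //; rewrite r2.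
- by apply: (P2 (k:=h3)) => //; rewrite r3.
Qed.

Lemma iso_split {g} (Horb : exists h, s h = s g /\ r h <> s g) : s g = r g ->
  exists h, [/\ s (inv h) <> r (inv h), s (mul h g) <> r (mul h g),
     s (inv h) = r (mul h g) & mul (inv h) (mul h g) = g].
Proof.
case: Horb => h [sh rh] e.
have c : comp h g by apply: sr_comp; rewrite sh.
exists h; split.
- by rewrite s_inv r_inv sh.
- by rewrite s_mul // r_mul // => E; apply: rh; rewrite -E.
- by rewrite s_inv r_mul.
- by apply: invl.
Qed.

Lemma part1 : (forall x, G0 x -> exists y1 y2,
      [/\ gorbit mul inv x y1, gorbit mul inv x y2 & y1 <> y2]) ->
    covers mul inv (full_group mul inv).
Proof.
move=> Horb g.
have [e|ne] := pselect (s g = r g); last first.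
  case: (P1 ne) => U [f [fU Ug pf cf]].
  by exists U, f; split => //; exists U.
have [h [sh rh]] : exists h, s h = s g /\ r h <> s g.
  case: (Horb _ (unit_s g)) => y1 [y2 [[h1 [s1 r1]] [h2 [s2 r2]] n12]].
  have [E|N] := pselect (y1 = s g).
  - by exists h2; split => //; rewrite r2 => E2; apply: n12; rewrite E E2.
  - by exists h1; rewrite r1.
case: (iso_split (ex_intro _ h (conj sh rh)) e) => h' [n1 n2 e3 e4].
case: (P1 n1) => U1 [f1 [fU1 U1g pf1 cf1]].
case: (P1 n2) => U2 [f2 [fU2 U2g pf2 cf2]].
have fU := fb_prod fU1 fU2; have pf := pi_prod fU1 fU2 pf1 pf2.
exists (prodB U1 U2), (f1 \o f2); split => //.
- by exists (inv h'), (mul h' g); split.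
- by exists (prodB U1 U2); split => //; apply: support_comp.
Qed.

Lemma part2 : (forall x, G0 x ->
      exists y1 y2 y3,
        [/\ gorbit mul inv x y1, gorbit mul inv x y2 & gorbit mul inv x y3] /\
        [/\ y1 <> y2, y1 <> y3 & y2 <> y3]) ->
    covers mul inv (derived (full_group mul inv)).
Proof.
move=> Horb g.
have [e|ne] := pselect (s g = r g); last first.
  case: (Q2 Horb ne) => U [f [fU Ug pf cf]].
  by exists U, f.
have [h [sh rh]] : exists h, s h = s g /\ r h <> s g.
  case: (Horb _ (unit_s g)) => y1 [y2 [y3 [[[h1 [s1 r1]] [h2 [s2 r2]] _] [n12 _ _]]]].
  have [E|N] := pselect (y1 = s g).
  - by exists h2; split => //; rewrite r2 => E2; apply: n12; rewrite E E2.
  - by exists h1; rewrite r1.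
case: (iso_split (ex_intro _ h (conj sh rh)) e) => h' [n1 n2 e3 e4].
case: (Q2 Horb n1) => U1 [f1 [fU1 U1g pf1 d1]].
case: (Q2 Horb n2) => U2 [f2 [fU2 U2g pf2 d2]].
have fU := fb_prod fU1 fU2; have pf := pi_prod fU1 fU2 pf1 pf2.
exists (prodB U1 U2), (f1 \o f2); split => //.
- by exists (inv h'), (mul h' g); split.
- move=> H HS Hid Hc Hi; apply: (Hc f1 f2); [exact: (d1 H HS Hid Hc Hi) | exact: (d2 H HS Hid Hc Hi)].
Qed.

End Gpd.

Theorem lemma4p8 (G : topologicalType) (comp : G -> G -> Prop)
    (mul : G -> G -> G) (inv : G -> G)
    (HG : is_topological_groupoid comp mul inv)
    (Hample : ample mul inv) (Heff : effective mul inv) :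
  ((forall x, unit_space mul inv x ->
      exists y1 y2, [/\ gorbit mul inv x y1, gorbit mul inv x y2 & y1 <> y2]) ->
    covers mul inv (full_group mul inv)) /\
  ((forall x, unit_space mul inv x ->
      exists y1 y2 y3,
        [/\ gorbit mul inv x y1, gorbit mul inv x y2 & gorbit mul inv x y3] /\
        [/\ y1 <> y2, y1 <> y3 & y2 <> y3]) ->
    covers mul inv (derived (full_group mul inv))).
Proof.
split; [exact: (@part1 G comp mul inv HG Hample) | exact: (@part2 G comp mul inv HG Hample)].
Qed.
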